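(* Let $(D,\mathfrak m,\Bbbk)$ be a $d$-dimensional local domain with fraction field $\mathbb F$ and let $\nu:\mathbb F^\times\to\mathbb Z^d$ be a valuation OK relative to $D$, with residue field $\Bbbk_V$ and $S=\nu(D\setminus0)$. Then there exists $\mathbf u\in S$ such that \[\nu(M\setminus0)+\mathbf u\subseteq\nu^{(h)}(M)\subseteq\nu(M\setminus0)\] for every $D$-submodule $M$ of $\mathbb F$ and every integer $1\le h\le[\Bbbk_V:\Bbbk]$.
   Context: Fix $\mathbf a\in\mathbb R^d$ with $\mathbb Q$-linearly independent coordinates; order $\mathbb Z^d$ by $\mathbf u\le\mathbf v$ iff $\langle\mathbf u,\mathbf a\rangle\le\langle\mathbf v,\mathbf a\rangle$. A valuation on $\mathbb F$ with value group $\mathbb Z^d$ is a surjective homomorphism $\nu:\mathbb F^\times\to\mathbb Z^d$ with $\nu(x+y)\ge\min\{\nu(x),\nu(y)\}$ whenever $x,y,x+y\ne0$; $\mathbb F_{\ge\mathbf u}=\{0\}\cup\{x:\nu(x)\ge\mathbf u\}$, $\mathbb F_{>\mathbf u}$ similarly; $V=\mathbb F_{\ge\mathbf0}$, maximal ideal $\mathfrak m_V$, residue field $\Bbbk_V$. $\nu$ is OK relative to $D$ if (i) $D\subseteq V$, $\mathfrak m=\mathfrak m_V\cap D$; (ii) $\langle\mathbf u,\mathbf a\rangle>0$ for all nonzero $\mathbf u$ in the closed convex cone generated by $\nu(D\setminus 0)$; (iii) $[\Bbbk_V:\Bbbk]<\infty$; (iv) some $\mathbf v\in\mathbb Z^d$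 has $D\cap\mathbb F_{\ge n\mathbf v}\subseteq\mathfrak m^n$ for all $n\ge0$. For a $D$-submodule $M\subseteq\mathbb F$ and $1\le h\le[\Bbbk_V:\Bbbk]$, $\nu^{(h)}(M)$ is the set of $\mathbf u\in\mathbb Z^d$ with $\dim_\Bbbk\big((M\cap\mathbb F_{\ge\mathbf u})/(M\cap\mathbb F_{>\mathbf u})\big)\ge h$. *)

(* Defs.v *)
From Stdlib Require Import Reals.
From HB Require Import structures.
From mathcomp Require Import all_boot all_order all_algebra.
Set Implicit Arguments. Unset Strict Implicit. Unset Printing Implicit Defensive.
Import GRing.Theory.
Local Open Scope ring_scope.

Definition int_to_R (z : int) : R :=
  match z with Posz n => INR n | Negz n => Ropp (INR n.+1) end.

Definition rat_to_R (q : rat) : R := Rdiv (int_to_R (numq q)) (int_to_R (denq q)).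

Definition Q_lin_indep (d : nat) (a : 'I_d -> R) : Prop :=
  forall q : 'I_d -> rat,
    \big[Rplus/R0]_(i < d) Rmult (rat_to_R (q i)) (a i) = R0 -> forall i, q i = 0.

Definition vdot (d : nat) (a : 'I_d -> R) (u : 'rV[int]_d) : R :=
  \big[Rplus/R0]_(i < d) Rmult (int_to_R (u ord0 i)) (a i).

Definition vle d a (u v : 'rV[int]_d) : Prop := Rle (vdot a u) (vdot a v).
Definition vlt d a (u v : 'rV[int]_d) : Prop := Rlt (vdot a u) (vdot a v).

(* nu : F^x -> Z^d (its value at 0 is irrelevant) is a surjective valuation *)
Definition is_valuation (F : fieldType) d (a : 'I_d -> R) (nu : F -> 'rV[int]_d) : Prop :=
  [/\ (forall x y : F, x != 0 -> y != 0 -> nu (x * y) = nu x + nu y),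
      (forall u : 'rV[int]_d, exists2 x : F, x != 0 & nu x = u) &
      (forall x y : F, x != 0 -> y != 0 -> x + y != 0 ->
          vle a (nu x) (nu (x + y)) \/ vle a (nu y) (nu (x + y)))].

Definition Fge (F : fieldType) d a (nu : F -> 'rV[int]_d) (u : 'rV[int]_d) (x : F) : Prop :=
  x = 0 \/ vle a u (nu x).
Definition Fgt (F : fieldType) d a (nu : F -> 'rV[int]_d) (u : 'rV[int]_d) (x : F) : Prop :=
  x = 0 \/ vlt a u (nu x).

Definition Vring (F : fieldType) d a (nu : F -> 'rV[int]_d) := Fge a nu 0.
Definition mV (F : fieldType) d a (nu : F -> 'rV[int]_d) := Fgt a nu 0.

Definition is_subring (F : fieldType) (D : F -> Prop) : Prop :=
  [/\ D 1, (forall x y, D x -> D y -> D (x - y)) & (forall x y, D x -> D y -> D (x * y))].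

Definition is_fraction_field (F : fieldType) (D : F -> Prop) : Prop :=
  forall x : F, exists a b : F, [/\ D a, D b, b != 0 & x = a / b].

Definition maxideal (F : fieldType) (D : F -> Prop) (x : F) : Prop :=
  D x /\ ~ (x != 0 /\ D x^-1).

Definition is_ideal (F : fieldType) (D : F -> Prop) (I : F -> Prop) : Prop :=
  [/\ (forall x, I x -> D x), I 0, (forall x y, I x -> I y -> I (x + y)) &
      (forall c x, D c -> I x -> I (c * x))].

Definition is_prime_ideal (F : fieldType) (D I : F -> Prop) : Prop :=
  [/\ is_ideal D I, ~ I 1 & (forall x y, D x -> D y -> I (x * y) -> I x \/ I y)].

Definition fin_generated (F : fieldType) (D I : F -> Prop) : Prop :=
  exists (n : nat) (g : 'I_n -> F), (forall j, I (g j)) /\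
    forall x, I x -> exists c : 'I_n -> F, (forall j, D (c j)) /\ x = \sum_(j < n) c j * g j.

Definition noetherian (F : fieldType) (D : F -> Prop) : Prop :=
  forall I, is_ideal D I -> fin_generated D I.

Definition is_local (F : fieldType) (D : F -> Prop) : Prop :=
  (forall x y, maxideal D x -> maxideal D y -> maxideal D (x + y)).

Definition prime_chain (F : fieldType) (D : F -> Prop) (n : nat) : Prop :=
  exists P : nat -> F -> Prop,
    (forall i, leq i n -> is_prime_ideal D (P i)) /\
    (forall i, leq i.+1 n -> (forall x, P i x -> P i.+1 x) /\ exists x, P i.+1 x /\ ~ P i x).

Definition krull_dim_eq (F : fieldType) (D : F -> Prop) (d : nat) : Prop :=
  prime_chain D d /\ ~ prime_chain D d.+1.

Definition ideal_pow (F : fieldType) (D I : F -> Prop) (n : nat) (x : F) : Prop :=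
  exists (k : nat) (c : 'I_k -> F) (y : 'I_k -> 'I_n -> F),
    [/\ (forall j, D (c j)), (forall j i, I (y j i)) &
        x = \sum_(j < k) c j * \prod_(i < n) y j i].

(* v_1..v_n in V have k-linearly independent images in k_V *)
Definition resfield_indep (F : fieldType) d a (nu : F -> 'rV[int]_d) (D : F -> Prop)
    (n : nat) (v : 'I_n -> F) : Prop :=
  (forall j, Vring a nu (v j)) /\
  forall c : 'I_n -> F, (forall j, D (c j)) ->
    mV a nu (\sum_(j < n) c j * v j) -> forall j, maxideal D (c j).

Definition resdeg_finite (F : fieldType) d a (nu : F -> 'rV[int]_d) (D : F -> Prop) : Prop :=
  exists N : nat, forall n (v : 'I_n -> F), resfield_indep a nu D v -> leq n N.

Definition resdeg_ge (F : fieldType) d a (nu : F -> 'rV[int]_d) (D : F -> Prop) (h : nat) : Prop :=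
  exists v : 'I_h -> F, resfield_indep a nu D v.

Definition in_cone (F : fieldType) d (nu : F -> 'rV[int]_d) (D : F -> Prop) (w : 'I_d -> R) : Prop :=
  exists (n : nat) (lam : 'I_n -> R) (xs : 'I_n -> F),
    [/\ (forall j, Rle R0 (lam j)), (forall j, D (xs j) /\ xs j != 0) &
        forall i, w i = \big[Rplus/R0]_(j < n) Rmult (lam j) (int_to_R (nu (xs j) ord0 i))].

Definition in_closed_cone (F : fieldType) d (nu : F -> 'rV[int]_d) (D : F -> Prop) (w : 'I_d -> R) : Prop :=
  forall eps : R, Rlt R0 eps ->
    exists c : 'I_d -> R, in_cone nu D c /\ forall i, Rlt (Rabs (Rminus (w i) (c i))) eps.

Definition OK_valuation (F : fieldType) d (a : 'I_d -> R) (nu : F -> 'rV[int]_d) (D : F -> Prop) : Prop :=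
  [/\ (forall x, D x -> Vring a nu x) /\
                (forall x, maxideal D x <-> (D x /\ mV a nu x)),
      (forall w : 'I_d -> R, in_closed_cone nu D w -> (exists i, w i <> R0) ->
                   Rlt R0 (\big[Rplus/R0]_(i < d) Rmult (w i) (a i))),
      resdeg_finite a nu D &
      exists v : 'rV[int]_d, forall (n : nat) (x : F),
                   D x -> Fge a nu (v *+ n) x -> ideal_pow D (maxideal D) n x].

Definition is_Dsubmodule (F : fieldType) (D M : F -> Prop) : Prop :=
  [/\ M 0, (forall x y, M x -> M y -> M (x + y)) & (forall c x, D c -> M x -> M (c * x))].

(* u \in nu^(h)(M): dim_k (M cap F_{>=u})/(M cap F_{>u}) >= h, i.e. there are h elements
   of M cap F_{>=u} whose classes are k-linearly independent *)
Definition nu_h (F : fieldType) d a (nu : F -> 'rV[int]_d) (D M : F -> Prop) (h : nat)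
    (u : 'rV[int]_d) : Prop :=
  exists x : 'I_h -> F, (forall j, M (x j) /\ Fge a nu u (x j)) /\
    forall c : 'I_h -> F, (forall j, D (c j)) ->
      Fgt a nu u (\sum_(j < h) c j * x j) -> forall j, maxideal D (c j).

(* Main.v *)
Require Import Defs.
From Stdlib Require Import Reals Lra.
From HB Require Import structures.
From mathcomp Require Import all_boot all_order all_algebra.
From mathcomp Require Import Rstruct.
From mathcomp Require Import ring.
Set Implicit Arguments. Unset Strict Implicit. Unset Printing Implicit Defensive.
Import GRing.Theory Num.Theory.
Local Open Scope ring_scope.

Lemma int_to_RE (z : int) : int_to_R z = z%:~R.
Proof.
by case: z => n; rewrite /int_to_R INRE ?NegzE.
Qed.

Lemma vdotE d (a : 'I_d -> R) (u : 'rV[int]_d) :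
  vdot a u = \sum_(i < d) (u ord0 i)%:~R * a i.
Proof. by rewrite /vdot; apply: eq_bigr => i _; rewrite int_to_RE. Qed.

Lemma vdotD d (a : 'I_d -> R) (u v : 'rV[int]_d) :
  vdot a (u + v) = Rplus (vdot a u) (vdot a v).
Proof.
rewrite RplusE !vdotE -big_split /=; apply: eq_bigr => i _.
by rewrite mxE intrD mulrDl.
Qed.

Lemma vdot0 d (a : 'I_d -> R) : vdot a 0 = R0.
Proof. by rewrite vdotE big1 // => i _; rewrite mxE mul0r. Qed.

Lemma vdot_inj d (a : 'I_d -> R) (u v : 'rV[int]_d) :
  Q_lin_indep a -> vdot a u = vdot a v -> u = v.
Proof.
move=> ha e.
have ez : vdot a (u - v) = 0.
  have := vdotD a (u - v) v; rewrite subrK e RplusE => /eqP.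
  by rewrite -subr_eq subrr eq_sym => /eqP.
have hq := ha (fun i => ((u - v) ord0 i)%:Q).
have H : forall i, (u - v) ord0 i = 0.
  move=> i; apply/eqP; rewrite -(intr_eq0 rat) ; apply/eqP; apply: hq.
  rewrite -[RHS]ez /vdot; apply: eq_bigr => j _.
  by rewrite /rat_to_R numq_int denq_int /= RdivE divr1.
apply/eqP; rewrite -subr_eq0; apply/eqP/matrixP => i j.
by rewrite (ord1 i) H mxE.
Qed.

Lemma exists_max (P : nat -> Prop) N : P 0 ->
  exists n, P n /\ forall h, P h -> (h <= N)%N -> (h <= n)%N.
Proof.
move=> P0; elim: N => [|N [n [Pn Hn]]].
  by exists 0%N; split => // h _; rewrite leqn0 => /eqP ->.
case: (Classical_Prop.classic (P N.+1)) => HN.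
  by exists N.+1; split.
exists n; split => // h Ph; rewrite leq_eqVlt => /orP [/eqP E|].
  by subst h.
by rewrite ltnS; apply: Hn.
Qed.

Lemma D0 (F : fieldType) (D : F -> Prop) : is_subring D -> D 0.
Proof. by case=> D1 DB _; rewrite -(subrr 1); apply: DB. Qed.

Lemma resdeg0 (F : fieldType) d a (nu : F -> 'rV[int]_d) (D : F -> Prop) :
  resdeg_ge a nu D 0.
Proof. by exists (fun _ => 0); split => [[]|c _ _ []]. Qed.

Lemma restrict (F : fieldType) d a (nu : F -> 'rV[int]_d) (D : F -> Prop)
  (hD : is_subring D) n (v : 'I_n -> F) h : (h <= n)%N ->
  resfield_indep a nu D v ->
  exists w : 'I_h -> F, resfield_indep a nu D w /\ forall j, exists i, w j = v i.
Proof.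
move=> hn; have [k Ek] : exists k, n = (h + k)%N by exists (n - h)%N; rewrite subnKC.
subst n => -[hV hI].
exists (fun j => v (lshift k j)); split; last by move=> j; exists (lshift k j).
split => [j|c hc hm j]; first exact: hV.
pose c' := fun i : 'I_(h + k) => match split i with inl j => c j | inr _ => 0 end.
have Hl : forall j, c' (lshift k j) = c j.
  by move=> j0; rewrite /c'; have -> : split (lshift k j0) = inl j0 := unsplitK (inl _ j0).
have Hr : forall j, c' (rshift h j) = 0.
  by move=> j0; rewrite /c'; have -> : split (rshift h j0) = inr j0 := unsplitK (inr _ j0).
have H1 : forall i, D (c' i).
  by move=> i; rewrite /c'; case: split => ?; [apply: hc | apply: D0].
have H2 : mV a nu (\sum_(i < h + k) c' i * v i).
  rewrite big_split_ord /= [X in _ + X]big1 ?addr0; last by move=> i _; rewrite Hr mul0r.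
  by rewrite (eq_bigr (fun j => c j * v (lshift k j))) // => i _; rewrite Hl.
by have := hI c' H1 H2 (lshift k j); rewrite Hl.
Qed.

Lemma D_prod (F : fieldType) (D : F -> Prop) (hD : is_subring D) (I : finType)
  (B : I -> F) : (forall i, D (B i)) -> forall P : pred I, D (\prod_(i | P i) B i).
Proof.
case: hD => D1 _ DM HB P; apply: (big_ind D) => //.
Qed.

Lemma mul4E (F : fieldType) (p q r s : F) : p * (q * r * s) = q * s * (p * r).
Proof. by rewrite mulrA mulrA [p * q]mulrC -!mulrA; congr (_ * _); rewrite [RHS]mulrC -mulrA. Qed.

Theorem mainTheorem11 (F : fieldType) (D : F -> Prop) (d : nat)
    (a : 'I_d -> R) (nu : F -> 'rV[int]_d)
    (hD : is_subring D) (hfrac : is_fraction_field D)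
    (hloc : is_local D) (hnoeth : noetherian D) (hdim : krull_dim_eq D d)
    (ha : Q_lin_indep a) (hnu : is_valuation a nu) (hOK : OK_valuation a nu D) :
  exists u : 'rV[int]_d,
    (exists2 y : F, D y /\ y != 0 & nu y = u) /\
    forall (M : F -> Prop), is_Dsubmodule D M ->
      forall h : nat, leq 1 h -> resdeg_ge a nu D h ->
        (forall x : F, M x -> x != 0 -> nu_h a nu D M h (nu x + u)) /\
        (forall w : 'rV[int]_d, nu_h a nu D M h w ->
           exists2 x : F, M x /\ x != 0 & nu x = w).
Proof.
case: hOK => [[hDV hmax] _ [N hN] _].
case: hnu => [numul _ _].
have hD' := hD; case: hD' => D1 DB DM.
have [n [[v hv] hmaxn]] := exists_max N (resdeg0 a nu D).
have hB : forall i, exists b, [/\ D b, b != 0 & D (b * v i)].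
  move=> i; have [x [y [Dx Dy y0 ->]]] := hfrac (v i).
  by exists y; split => //; rewrite mulrC divfK.
have [B hB'] := fin_all_exists hB.
pose b := \prod_i B i.
have Db : D b by apply: D_prod => // i; case: (hB' i).
have b0 : b != 0 by rewrite prodf_seq_neq0; apply/allP => i _; case: (hB' i).
have Dbv : forall i, D (b * v i).
  move=> i; rewrite /b (bigD1 i) //= mulrAC; apply: DM; first by case: (hB' i).
  by apply: D_prod => // j; case: (hB' j).
exists (nu b); split; first by exists b.
move=> M [M0 MD MS] h h1 hh.
have hle : (h <= n)%N.
  by apply: hmaxn => //; case: hh => w hw; exact: hN _ w hw.
have [w [[hwV hwI] hwv]] := restrict hD hle hv.
have Dbw : forall j, D (b * w j) by move=> j; case: (hwv j) => i ->.
split.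
- move=> x Mx x0; exists (fun j => b * w j * x); split.
  + move=> j; split; first by apply: MS.
    case: (eqVneq (w j) 0) => [->|wj0]; first by left; rewrite mulr0 mul0r.
    case: (hwV j) => [/eqP|hw]; first by rewrite (negbTE wj0).
    right; rewrite /vle numul ?mulf_neq0 // numul // !vdotD.
    move: hw; rewrite /vle vdot0; lra.
  + move=> c hc hgt j; apply: hwI => //.
    have E : \sum_(j < h) c j * (b * w j * x) = (b * x) * \sum_(j < h) c j * w j.
      by rewrite big_distrr; apply: eq_bigr => i _; rewrite mul4E.
    move: hgt; rewrite E; set s := \sum_(j < h) c j * w j => hgt.
    rewrite /mV /Fgt; case: (eqVneq s 0) => [->|s0]; [by left | right].
    case: hgt => [|hg]; first by move=> /eqP; rewrite !mulf_eq0 (negbTE b0) (negbTE x0) (negbTE s0).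
    move: hg; rewrite /vlt !numul ?mulf_neq0 // !vdotD vdot0; lra.
- move=> u [x [hx hI]].
  have j0 : 'I_h := Ordinal h1.
  case: (hx j0) => Mx hge.
  have notgt : ~ Fgt a nu u (x j0).
    move=> hg.
    have H1 : forall j, D (if j == j0 then 1 else 0).
      by move=> j; case: (j == j0) => //; apply: D0.
    have H2 : Fgt a nu u (\sum_(j < h) (if j == j0 then 1 else 0) * x j).
      rewrite (bigD1 j0) //= eqxx mul1r big1 ?addr0 // => j /negbTE ->.
      by rewrite mul0r.
    have := hI _ H1 H2 j0.
    by rewrite eqxx => -[_]; apply; split; [apply: oner_neq0 | rewrite invr1].
  have xj0 : x j0 != 0 by apply/eqP => e; apply: notgt; left.
  exists (x j0) => //; apply: vdot_inj ha _.
  case: hge => [/eqP|hge]; first by rewrite (negbTE xj0).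
  move: hge; rewrite /vle => hge.
  apply: Rle_antisym => //; apply: Rnot_lt_le => hl; apply: notgt; right; exact: hl.
Qed.
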